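(* Let $\omega=\omega_0\omega_1\cdots$ be an infinite sequence over $\{b,c,d\}$ which is not eventually constant. Then for each $n\ge0$ there is a nontrivial element $t\in\mathrm{Rist}_{G_\omega}(1^n)$ with word length at most $2^{n+2}$ with respect to the generators $a,b,c,d$.
   Context: Let $\mathbf{T}=\{0,1\}^*$ be the rooted binary tree of finite binary strings, and $a$ the automorphism flipping the first bit of a string ($a$ fixes the empty string). For each $x\in\{b,c,d\}$ and $n\ge0$, the automorphism $x_n$ is defined by $x_n(1^j)=1^j$ for all $j\ge0$, and $x_n(1^j0s)=1^j0s$ if $\omega_{n+j}=x$, $x_n(1^j0s)=1^j0a(s)$ if $\omega_{n+j}\ne x$, for all $j\ge0$ and strings $s$. Write $b=b_0,c=c_0,d=d_0$; the generalized Grigorchuk group is $G_\omega=\langle a,b,c,d\rangle$. For a string $s$, $\mathrm{Rist}(s)$ is the group of automorphisms of $\mathbf{T}$ fixing every string not beginning with $s$, and $\mathrm{Rist}_{G_\omega}(s)=G_\omega\cap\mathrm{Rist}(s)$. *)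

(* Defs.v *)
From mathcomp Require Import all_boot.
Set Implicit Arguments. Unset Strict Implicit. Unset Printing Implicit Defensive.

(* Vertices of the binary tree {0,1}^*: finite bit strings, false = 0, true = 1. *)
Definition vertex := seq bool.

Inductive bcd := LB | LC | LD.
Definition bcd_eqb (x y : bcd) : bool :=
  match x, y with LB, LB | LC, LC | LD, LD => true | _, _ => false end.

Inductive gen := Ga | Gb | Gc | Gd.

Definition act_a (s : vertex) : vertex :=
  match s with [::] => [::] | x :: t => negb x :: t end.

Fixpoint act_x (om : nat -> bcd) (x : bcd) (n : nat) (s : vertex) : vertex :=
  match s with
  | [::] => [::]
  | true :: t => true :: act_x om x n.+1 t
  | false :: t => false :: (if bcd_eqb (om n) x then t else act_a t)
  end.

(* Action of a generator of G_omega (b = b_0, c = c_0, d = d_0). *)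
Definition act_gen (om : nat -> bcd) (g : gen) : vertex -> vertex :=
  match g with
  | Ga => act_a
  | Gb => act_x om LB 0
  | Gc => act_x om LC 0
  | Gd => act_x om LD 0
  end.

(* The element of G_omega represented by a word g_1 g_2 ... g_k
   (the composite g_1 o g_2 o ... o g_k). *)
Definition eval_word (om : nat -> bcd) (w : seq gen) : vertex -> vertex :=
  foldr (fun g f => act_gen om g \o f) id w.

Definition in_Rist (s : vertex) (f : vertex -> vertex) : Prop :=
  forall v : vertex, ~~ prefix s v -> f v = v.

Definition nontrivial (f : vertex -> vertex) : Prop := exists v : vertex, f v <> v.

Definition eventually_constant (om : nat -> bcd) : Prop :=
  exists N x, forall m, N <= m -> om m = x.

(* Main.v *)
Require Import Defs.
From mathcomp Require Import all_boot.
From mathcomp Require Import zify.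
From Stdlib Require Import Classical.

Definition actk (om : nat -> bcd) k (g : gen) : vertex -> vertex :=
  match g with Ga => act_a | Gb => act_x om LB k | Gc => act_x om LC k | Gd => act_x om LD k end.
Definition evalk (om : nat -> bcd) k (w : seq gen) : vertex -> vertex :=
  foldr (fun g f => actk om k g \o f) id w.

Lemma eval_word_evalk om w s : eval_word om w s = evalk om 0 w s.
Proof. by elim: w s => [|g w IH] s //=; rewrite IH; case: g. Qed.

Lemma evalk_cat om k w1 w2 s : evalk om k (w1 ++ w2) s = evalk om k w1 (evalk om k w2 s).
Proof. by elim: w1 s => [|g w IH] s //=; rewrite IH. Qed.

Lemma evalk_nil om k w : evalk om k w [::] = [::].
Proof. by elim: w => [|g w IH] //=; rewrite IH; case: g. Qed.

Lemma act_a_inv s : act_a (act_a s) = s.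
Proof. by case: s => [|b t] //=; rewrite negbK. Qed.

Lemma act_x_inv om x k s : act_x om x k (act_x om x k s) = s.
Proof.
elim: s k => [|b t IH] k //=. case: b => /=. by rewrite IH.
by case: (bcd_eqb (om k) x) => //=; rewrite act_a_inv.
Qed.

Lemma bcd_eqbP x y : reflect (x = y) (bcd_eqb x y).
Proof. by case: x; case: y; constructor. Qed.

Lemma bcd_eqb_sym x y : bcd_eqb x y = bcd_eqb y x.
Proof. by case: x; case: y. Qed.

Lemma bcd_eqb_refl x : bcd_eqb x x = true.
Proof. by case: x. Qed.

Definition gen_of (x : bcd) : gen := match x with LB => Gb | LC => Gc | LD => Gd end.
Definition other (x : bcd) : bcd := match x with LB => LC | LC => LD | LD => LB end.
Definition Yl (om : nat -> bcd) (j : nat) : bcd :=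
  match j with 0 => other (om 0)
  | j'.+1 => if bcd_eqb (om j') (om j) then other (om j) else om j' end.

Lemma Yl_ne om j : bcd_eqb (om j) (Yl om j) = false.
Proof.
case: j => [|j] /=; first by case: (om 0).
case E: (bcd_eqb (om j) (om j.+1)); first by case: (om j.+1).
by rewrite bcd_eqb_sym.
Qed.

Lemma actk_gen_of om k x : actk om k (gen_of x) = act_x om x k.
Proof. by case: x. Qed.

Definition liftw (om : nat -> bcd) k (w : seq gen) : seq gen :=
  flatten (map (fun g => match g with Ga => [:: Ga; gen_of (Yl om k); Ga] | _ => [:: g] end) w).
Definition alphab (om : nat -> bcd) k (g : gen) : bool :=
  match g with Ga => false | Gb => ~~ bcd_eqb (om k) LB
  | Gc => ~~ bcd_eqb (om k) LC | Gd => ~~ bcd_eqb (om k) LD end.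
Definition fw (om : nat -> bcd) k (w : seq gen) : seq gen :=
  flatten (map (fun g => match g with Ga => [:: gen_of (Yl om k)]
     | _ => if alphab om k g then [:: Ga] else [::] end) w).

Lemma lift_true om k w s :
  evalk om k (liftw om k w) (true :: s) = true :: evalk om k.+1 w s.
Proof.
elim: w => [|g w IH] //=. rewrite evalk_cat IH.
case: g => //=. rewrite actk_gen_of /= Yl_ne /=. done.
Qed.

Lemma lift_false om k w s :
  evalk om k (liftw om k w) (false :: s) = false :: evalk om k.+1 (fw om k w) s.
Proof.
elim: w => [|g w IH] //=. rewrite evalk_cat IH evalk_cat.
case: g => /=.
- by rewrite !actk_gen_of /=.
- by case: (bcd_eqb (om k) LB).
- by case: (bcd_eqb (om k) LC).
- by case: (bcd_eqb (om k) LD).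
Qed.

Definition alphaf (om : nat -> bcd) k x (s : vertex) : vertex :=
  if alphab om k (gen_of x) then act_a s else s.

Fixpoint Ed (om : nat -> bcd) k d : vertex -> vertex :=
  match d with 0 => act_x om (Yl om k) k.+1
  | d'.+1 => fun s => Ed om k d' (alphaf om k (Yl om (k + d)) (Ed om k d' s)) end.

Fixpoint Sh (om : nat -> bcd) k d (w : seq gen) (s : vertex) : vertex :=
  match w with [::] => s
  | g :: w' => let u := Sh om k d w' s in
     match g with Ga => Ed om k d u | _ => if alphab om k g then act_a u else u end end.

Lemma Sh_cat om k d w1 w2 s : Sh om k d (w1 ++ w2) s = Sh om k d w1 (Sh om k d w2 s).
Proof. by elim: w1 => [|g w IH] //=; rewrite IH. Qed.

Lemma Sh_letter om k d x w s : Sh om k d (gen_of x :: w) s = alphaf om k x (Sh om k d w s).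
Proof. by case: x. Qed.

Lemma L0 om k w s : evalk om k.+1 (fw om k w) s = Sh om k 0 w s.
Proof.
elim: w => [|g w IH] //=. rewrite evalk_cat IH.
case: g => /=.
- by rewrite actk_gen_of.
- by case: (~~ bcd_eqb (om k) LB).
- by case: (~~ bcd_eqb (om k) LC).
- by case: (~~ bcd_eqb (om k) LD).
Qed.

Lemma L1 om k d w s : Sh om k d (liftw om (k + d).+1 w) s = Sh om k d.+1 w s.
Proof.
elim: w => [|g w IH] //=. rewrite Sh_cat IH.
case: g => //. rewrite addnS; by case: (Yl om (k + d).+1).
Qed.

Fixpoint Wd (om : nat -> bcd) d k : seq gen :=
  match d with 0 => [:: Ga; gen_of (om k.-1); Ga; gen_of (om k.-1)]
  | d'.+1 => liftw om k (Wd om d' k.+1) end.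

Lemma L2 om k d : forall e s,
  Sh om k e (Wd om d (k + e).+1) s = Sh om k (e + d) (Wd om 0 (k + e + d).+1) s.
Proof.
elim: d => [|d IH] e s; first by rewrite !addn0.
have E1 : e.+1 + d = e + d.+1 by rewrite addSn addnS.
have E2 : k + e.+1 + d = k + e + d.+1 by rewrite !addnS addSn.
rewrite -E1 -E2 -IH.
change (Wd om d.+1 (k+e).+1) with (liftw om (k+e).+1 (Wd om d (k+e).+2)).
by rewrite L1 addnS.
Qed.

Lemma alphaf_inv om k x s : alphaf om k x (alphaf om k x s) = s.
Proof. rewrite /alphaf. by case: (alphab om k (gen_of x)); rewrite ?act_a_inv. Qed.

Lemma Ed_inv om k d s : Ed om k d (Ed om k d s) = s.
Proof.
elim: d s => [|d IH] s /=; first by rewrite act_x_inv.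
by rewrite IH alphaf_inv IH.
Qed.

Lemma alphab_gen_of om k x : alphab om k (gen_of x) = ~~ bcd_eqb (om k) x.
Proof. by case: x. Qed.

Lemma EdQ om k d :
  (forall j, j <= d -> om (k + j) = om k) \/ (forall s, Ed om k d s = s)
  \/ (forall s, Ed om k d s = act_a s).
Proof.
elim: d => [|d IH].
  left => j; rewrite leqn0 => /eqP ->; by rewrite addn0.
case: IH => [H|[H|H]].
- case E: (bcd_eqb (om (k + d.+1)) (om k)).
    left => j; rewrite leq_eqVlt => /orP [/eqP ->|Hj]; first by apply/bcd_eqbP.
    by apply: H.
  right; left => s /=.
  have Hd := H d (leqnn d).
  have -> : Yl om (k + d.+1) = om k.
    by rewrite addnS /= Hd bcd_eqb_sym -addnS E.
  by rewrite /alphaf alphab_gen_of bcd_eqb_refl /= Ed_inv.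
- right => /=. rewrite /alphaf.
  case: (alphab om k (gen_of (Yl om (k + d.+1)))); [right|left] => s; by rewrite !H.
- right => /=. rewrite /alphaf.
  case: (alphab om k (gen_of (Yl om (k + d.+1)))); [right|left] => s; by rewrite !H ?act_a_inv.
Qed.

Lemma shadow_aux : True. Proof. by []. Qed.

Lemma shadow om k d s : evalk om k.+1 (fw om k (Wd om d k.+1)) s = s.
Proof.
rewrite L0. have := L2 om k d 0 s. rewrite !addn0 add0n => ->.
have -> : forall x, Sh om k d [:: Ga; gen_of x; Ga; gen_of x] s =
   Ed om k d (alphaf om k x (Ed om k d (alphaf om k x s))) by case.
case: (EdQ om k d) => [H|[H|H]].
- have -> : om (k + d) = om k by apply: H.
  by rewrite /alphaf alphab_gen_of bcd_eqb_refl /= Ed_inv.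
- by rewrite !H alphaf_inv.
- rewrite !H /alphaf. by case: (alphab om k (gen_of (om (k + d)))); rewrite ?act_a_inv.
Qed.

Lemma Rist_d om d : forall k v, ~~ prefix (nseq d true) v -> evalk om k (Wd om d k) v = v.
Proof.
elim: d => [|d IH] k v; first by case: v.
case: v => [|b t] H; first by rewrite evalk_nil.
case: b H => H /=.
- by rewrite lift_true IH.
- by rewrite lift_false shadow.
Qed.

Lemma Wd_nseq om d : forall k s,
  evalk om k (Wd om d k) (nseq d true ++ s) = nseq d true ++ evalk om (k + d) (Wd om 0 (k + d)) s.
Proof.
elim: d => [|d IH] k s; first by rewrite addn0.
by rewrite /= lift_true IH addSn addnS.
Qed.

Lemma act_x_nseq om x k i u :
  act_x om x k (nseq i true ++ false :: u) =
  nseq i true ++ false :: (if bcd_eqb (om (k + i)) x then u else act_a u).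
Proof.
elim: i k => [|i IH] k /=; first by rewrite addn0.
by rewrite IH addSn addnS.
Qed.

Lemma base_nontriv om (Hom : ~ eventually_constant om) n x :
  exists s, evalk om n [:: Ga; gen_of x; Ga; gen_of x] s <> s.
Proof.
case E: (bcd_eqb (om n) x).
- case: (classic (exists i, om (n.+1 + i) <> x)) => [[i Hi]|H]; last first.
    exfalso; apply: Hom; exists n.+1, x => m Hm.
    rewrite -(subnKC Hm); apply: NNPP => Hne; apply: H; by exists (m - n.+1).
  exists (false :: (nseq i true ++ [:: false; false])).
  rewrite /= !actk_gen_of /= E act_x_nseq.
  have -> : bcd_eqb (om (n.+1 + i)) x = false by apply/bcd_eqbP.
  by move=> [] /(congr1 (drop i)); rewrite !drop_size_cat ?size_nseq.
- exists [:: false; false].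
  by rewrite /= !actk_gen_of /= E.
Qed.

Definition isA (g : gen) : bool := match g with Ga => true | _ => false end.

Lemma size_lift om k w :
  size (liftw om k w) = size w + 2 * count isA w /\ count isA (liftw om k w) = 2 * count isA w.
Proof.
elim: w => [|g w [IH1 IH2]] //=. rewrite size_cat count_cat IH1 IH2.
case: g => /=; try lia.
by case: (Yl om k) => /=; lia.
Qed.

Lemma size_Wd om d : forall k, size (Wd om d k) = 2 ^ (d + 2) /\ count isA (Wd om d k) = 2 ^ (d + 1).
Proof.
elim: d => [|d IH] k.
  by rewrite /=; case: (om k.-1).
have [H1 H2] := IH k.+1.
have [H3 H4] := size_lift om k (Wd om d k.+1).
rewrite /= H3 H4 H1 H2 !addSn !expnS.
have -> : 2 ^ (d + 2) = 2 * 2 ^ (d + 1) by rewrite (addnS d 1) expnS.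
split; lia.
Qed.

Theorem lemma6p3 (om : nat -> bcd) (Hom : ~ eventually_constant om) (n : nat) :
  exists w : seq gen,
    size w <= 2 ^ (n + 2) /\
    nontrivial (eval_word om w) /\
    in_Rist (nseq n true) (eval_word om w).
Proof.
exists (Wd om n 0). split; first by have [-> _] := size_Wd om n 0.
split.
- have [s Hs] := @base_nontriv om Hom (0 + n) (om (0 + n).-1).
  exists (nseq n true ++ s). rewrite eval_word_evalk Wd_nseq => /eqP.
  rewrite eqseq_cat // eqxx /= => /eqP; exact: Hs.
- move=> v Hv. rewrite eval_word_evalk. exact: Rist_d.
Qed.
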